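(* Let $q$ be a prime power and $1\le s<t<k$ integers. If there exists a linear AOA$(s,t,k,q)$, then there exists a linear AOA$(k-t,k-s,k,q)$.
   Context: An orthogonal array OA$(t,k,v)$ (with $1\le t\le k$) is a $v^t\times k$ array with entries from a set $X$ of size $v$ such that, for every choice of $t$ of its columns, each $t$-tuple in $X^t$ appears exactly once as a row of the corresponding $v^t\times t$ subarray. For integers $1\le s\le t\le k$, an augmented orthogonal array AOA$(s,t,k,v)$ is a $v^t\times(k+1)$ array $A$ such that: (1) the first $k$ columns of $A$ form an OA$(t,k,v)$ on a symbol set $X$ of size $v$; (2) the last column of $A$ has entries from a set $Y$ of size $v^{t-s}$; (3) for any choice of $s$ of the first $k$ columns, these $s$ columns together with the last column contain every $(s+1)$-tuple of $X^s\times Y$ exactly once as a row. For a prime power $q$, an AOA$(s,t,k,q)$ is linear if $X=\mathbb{F}_q$, $Y=\mathbb{F}_q^{t-s}$, and its set of rows, regarded as vectors in $\mathbb{F}_q^{k}\times\mathbb{F}_q^{t-s}=\mathbb{F}_q^{k+t-s}$, is an $\mathbb{F}_q$-linear subspace. *)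

(* Defs.v *)
From HB Require Import structures.
From mathcomp Require Import all_boot all_order all_algebra.
Set Implicit Arguments. Unset Strict Implicit. Unset Printing Implicit Defensive.
Import GRing.Theory.

Definition is_OA (X : finType) (t k : nat) (A : seq {ffun 'I_k -> X}) : Prop :=
  [/\ (1 <= t)%N, (t <= k)%N, size A = (#|X| ^ t)%N &
      forall c : 'I_t -> 'I_k, injective c ->
      forall x : {ffun 'I_t -> X},
        count (fun r : {ffun 'I_k -> X} => [forall i, r (c i) == x i]) A = 1%N].

(* Augmented orthogonal array AOA(s,t,k,v) with v = #|X|: rows are pairs
   (first k entries, last-column entry in Y). *)
Definition is_AOA (X Y : finType) (s t k : nat)
    (A : seq ({ffun 'I_k -> X} * Y)) : Prop :=
  [/\ (1 <= s)%N, (s <= t)%N,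
      @is_OA X t k (map fst A),
      #|Y| = (#|X| ^ (t - s))%N &
      forall c : 'I_s -> 'I_k, injective c ->
      forall (x : {ffun 'I_s -> X}) (y : Y),
        count (fun r : {ffun 'I_k -> X} * Y =>
                 [forall i, r.1 (c i) == x i] && (r.2 == y)) A = 1%N].

(* Linear AOA over the finite field F (q = #|F|): X = F, Y = F^(t-s), and
   the set of rows, viewed in F^k x F^(t-s) = F^(k+t-s), is an F-subspace. *)
Definition is_linear_AOA (F : finFieldType) (s t k : nat)
    (A : seq ({ffun 'I_k -> F} * {ffun 'I_(t - s) -> F})) : Prop :=
  [/\ @is_AOA F _ s t k A,
      (([ffun => 0%R], [ffun => 0%R]) : {ffun 'I_k -> F} * {ffun 'I_(t - s) -> F}) \in A &
      forall (a : F) (u v : {ffun 'I_k -> F} * {ffun 'I_(t - s) -> F}),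
        u \in A -> v \in A ->
        ([ffun i => (a * u.1 i + v.1 i)%R], [ffun j => (a * u.2 j + v.2 j)%R]) \in A].

(* Main.v *)
Require Import Defs.
From HB Require Import structures.
From mathcomp Require Import all_boot all_order all_algebra.
From mathcomp Require Import zify.
Set Implicit Arguments. Unset Strict Implicit. Unset Printing Implicit Defensive.
Import GRing.Theory.
Local Open Scope ring_scope.

Section Dual.
Variables (F : finFieldType) (D : finType).
Local Notation V := {ffun D -> F}.

Lemma dual_unique (C : pred V) (I : pred D) :
  (forall a (u v : V), C u -> C v -> C [ffun d => a * u d + v d]) ->
  C [ffun => 0] ->
  (forall z : V, exists c, C c /\ forall d, I d -> c d = z d) ->
  (forall c1 c2, C c1 -> C c2 -> (forall d, I d -> c1 d = c2 d) -> c1 = c2) ->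
  (forall z : V, exists w : V, [forall c : V, C c ==> (\sum_d w d * c d == 0)]
        /\ forall d, ~~ I d -> w d = z d) /\
  (forall w1 w2 : V, [forall c : V, C c ==> (\sum_d w1 d * c d == 0)] ->
        [forall c : V, C c ==> (\sum_d w2 d * c d == 0)] ->
        (forall d, ~~ I d -> w1 d = w2 d) -> w1 = w2).
Proof.
move=> lin C0 ex uniq.
have He0 : forall i, exists c : V, C c /\
    forall d, I d -> c d = (d == i)%:R.
  move=> i; have [c [Cc Hc]] := ex [ffun d => (d == i)%:R].
  by exists c; split=> // d Id; rewrite Hc // ffunE.
have [e He] := fin_all_exists He0.
have Csum : forall (r : seq D) (P : pred D) (f : D -> V), (forall i, C (f i)) ->
    C [ffun d => \sum_(i <- r | P i) f i d].
  move=> r P f Cf; elim: r => [|i r IH].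
    by have -> : [ffun d => \sum_(i <- [::] | P i) f i d] = [ffun => 0]
      by apply/ffunP=> d; rewrite !ffunE big_nil.
  case Pi: (P i).
    have -> : [ffun d => \sum_(j <- i :: r | P j) f j d] =
      [ffun d => 1 * f i d + [ffun d => \sum_(j <- r | P j) f j d] d].
      by apply/ffunP=> d; rewrite !ffunE big_cons Pi mul1r.
    by apply: lin.
  have -> : [ffun d => \sum_(j <- i :: r | P j) f j d] =
      [ffun d => \sum_(j <- r | P j) f j d].
    by apply/ffunP=> d; rewrite !ffunE big_cons Pi.
  exact: IH.
have Cscale : forall a (u : V), C u -> C [ffun d => a * u d].
  move=> a u Cu.
  have -> : [ffun d => a * u d] = [ffun d => a * u d + [ffun => 0] d].
    by apply/ffunP=> d; rewrite !ffunE addr0.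
  exact: lin.
have decomp : forall c, C c -> forall d,
    c d = \sum_(i | I i) c i * e i d.
  move=> c Cc.
  suff E : c = [ffun d => \sum_(i | I i) [ffun d' => c i * e i d'] d].
    move=> d; rewrite {1}E ffunE; apply: eq_bigr => i _; by rewrite ffunE.
  apply: uniq => //.
    by apply: Csum => i; apply: Cscale; case: (He i).
  move=> d Id; rewrite ffunE (bigD1 d) //= ffunE.
  rewrite (proj2 (He d)) // eqxx mulr1 big1 ?addr0 // => i /andP [_ ndi].
  by rewrite ffunE (proj2 (He i)) // eq_sym (negbTE ndi) mulr0.
have dote : forall (w : V) i, I i ->
    \sum_d w d * e i d = w i + \sum_(d | ~~ I d) w d * e i d.
  move=> w i Ii; rewrite (bigID I) /=; congr (_ + _).
  rewrite (bigD1 i) //= (proj2 (He i)) // eqxx mulr1 big1 ?addr0 //.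
  by move=> d /andP [Id ndi]; rewrite (proj2 (He i)) // (negbTE ndi) mulr0.
split.
  move=> z.
  exists [ffun d => if I d then - \sum_(j | ~~ I j) z j * e d j else z d].
  split; last by move=> d nId; rewrite ffunE (negbTE nId).
  apply/forallP=> c; apply/implyP=> Cc; apply/eqP.
  rewrite (bigID I) /=.
  have -> : \sum_(i | ~~ I i) [ffun d => if I d then
        - \sum_(j | ~~ I j) z j * e d j else z d] i * c i =
      \sum_(i | I i) c i * \sum_(j | ~~ I j) z j * e i j.
    rewrite (eq_bigr (fun i => \sum_(j | I j) z i * (c j * e j i))); last first.
      move=> i nIi; rewrite ffunE (negbTE nIi) (decomp c Cc i) mulr_sumr.
      by [].
    rewrite exchange_big /=; apply: eq_bigr => j Ij; rewrite mulr_sumr.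
    by apply: eq_bigr => i _; rewrite mulrCA.
  rewrite -[X in X + _ = 0]opprK -sumrN; apply/eqP; rewrite addrC subr_eq0; apply/eqP.
  apply: eq_bigr => i Ii; rewrite ffunE Ii.
  by rewrite mulNr opprK mulrC.
move=> w1 w2 W1 W2 agree; apply/ffunP=> i.
case Ii: (I i); last by apply: agree; rewrite Ii.
have := forallP W1 (e i); have := forallP W2 (e i).
rewrite (proj1 (He i)) /= => /eqP h2 /eqP h1.
move: h1 h2; rewrite !dote //.
rewrite (eq_bigr (fun d => w2 d * e i d)); last by move=> d nId; rewrite agree.
move=> h1 h2; apply/eqP; rewrite -(subr_eq0 (w1 i)) .
have : w1 i + \sum_(d | ~~ I d) w2 d * e i d - (w2 i + \sum_(d | ~~ I d) w2 d * e i d) = 0.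
  by rewrite h1 h2 subr0.
by rewrite opprD addrACA subrr addr0 => ->.
Qed.
End Dual.
Lemma count1_eq (T : eqType) (P : pred T) (s : seq T) x y :
  count P s = 1%N -> x \in s -> y \in s -> P x -> P y -> x = y.
Proof.
rewrite -size_filter => h xs ys Px Py.
have xf : x \in filter P s by rewrite mem_filter Px.
have yf : y \in filter P s by rewrite mem_filter Py.
move: h xf yf; case: (filter P s) => [|a [|b r]] //= _.
by rewrite !inE => /eqP -> /eqP ->.
Qed.

Lemma size_count (T : Type) (X : finType) (P : X -> pred T) (r : seq T) :
  (forall a, (\sum_x (P x a : nat))%N = 1%N) -> size r = (\sum_x count (P x) r)%N.
Proof.
move=> h; elim: r => [|a r IH] /=; first by rewrite big1.
by rewrite big_split /= h IH.
Qed.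

Section Vec.
Variables (F : finFieldType) (k m m' : nat) (e : m' = m).
Definition D := ('I_k + 'I_m)%type.
Definition vec (p : {ffun 'I_k -> F} * {ffun 'I_m' -> F}) : {ffun D -> F} :=
  [ffun d => match d with inl i => p.1 i | inr j => p.2 (cast_ord (esym e) j) end].
Definition unvec (v : {ffun D -> F}) : {ffun 'I_k -> F} * {ffun 'I_m' -> F} :=
  ([ffun i => v (inl i)], [ffun j => v (inr (cast_ord e j))]).
Lemma vecK : cancel vec unvec.
Proof.
case=> x y; rewrite /vec /unvec; congr (_, _); apply/ffunP=> i; rewrite !ffunE //=.
by rewrite cast_ordK.
Qed.
Lemma unvecK : cancel unvec vec.
Proof. by move=> v; apply/ffunP; case=> i; rewrite !ffunE //= cast_ordKV. Qed.
End Vec.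

Lemma A_side (F : finFieldType) (k m : nat)
  (A : seq ({ffun 'I_k -> F} * {ffun 'I_m -> F})) (a : nat) (c : 'I_a -> 'I_k)
  (b : bool) (S : pred 'I_k) :
  (forall i', S i' -> exists i, c i = i') -> (forall i, S (c i)) ->
  (forall (x : {ffun 'I_a -> F}) (y : {ffun 'I_m -> F}),
      count (fun r : {ffun 'I_k -> F} * {ffun 'I_m -> F} =>
      [forall i, r.1 (c i) == x i] && (b ==> (r.2 == y))) A = 1%N) ->
  (forall z : {ffun D k m -> F}, exists c0, unvec (erefl m) c0 \in A /\
     forall d, (match d with inl i => S i | inr _ => b end) -> c0 d = z d) /\
  (forall c1 c2 : {ffun D k m -> F}, unvec (erefl m) c1 \in A ->
     unvec (erefl m) c2 \in A ->
     (forall d, (match d with inl i => S i | inr _ => b end) -> c1 d = c2 d) ->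
     c1 = c2).
Proof.
move=> Sc cS hc; split.
  move=> z; have := hc [ffun i => z (inl (c i))] [ffun j => z (inr j)].
  move=> h; have : has (fun r : {ffun 'I_k -> F} * {ffun 'I_m -> F} =>
      [forall i, r.1 (c i) == [ffun i => z (inl (c i))] i] &&
      (b ==> (r.2 == [ffun j => z (inr j)]))) A by rewrite has_count h.
  case/hasP=> p pA /andP [/forallP h1 h2].
  exists (vec (erefl m) p); split; first by rewrite vecK.
  case=> [i' Si' | j bj]; rewrite ffunE /=.
    have [i <-] := Sc i' Si'; by have /eqP -> := h1 i; rewrite ffunE.
  by move: h2; rewrite bj /= => /eqP ->; rewrite ffunE cast_ord_id.
move=> c1 c2 A1 A2 ag.
rewrite -(unvecK (erefl m) c1) -(unvecK (erefl m) c2); congr vec.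
apply: (count1_eq (hc [ffun i => c1 (inl (c i))] [ffun j => c1 (inr j)])) => //.
  apply/andP; split; first by apply/forallP => i; rewrite !ffunE.
  by apply/implyP=> _; apply/eqP/ffunP=> j; rewrite !ffunE cast_ord_id.
apply/andP; split.
  by apply/forallP => i; rewrite !ffunE ag.
apply/implyP=> bb; apply/eqP/ffunP=> j; rewrite !ffunE cast_ord_id ag //.
Qed.

Lemma B_side (F : finFieldType) (k m m' : nat) (e : m' = m)
  (W : pred {ffun D k m -> F}) (a : nat) (c : 'I_a -> 'I_k) (b : bool) :
  injective c ->
  (forall z : {ffun D k m -> F}, exists w, W w /\
     forall d, (match d with inl i => i \in codom c | inr _ => b end) -> w d = z d) ->
  (forall w1 w2, W w1 -> W w2 ->
     (forall d, (match d with inl i => i \in codom c | inr _ => b end) -> w1 d = w2 d) ->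
     w1 = w2) ->
  forall x y, count (fun r : {ffun 'I_k -> F} * {ffun 'I_m' -> F} =>
      [forall i, r.1 (c i) == x i] && (b ==> (r.2 == y)))
    (enum [pred p : {ffun 'I_k -> F} * {ffun 'I_m' -> F} | W (vec e p)]) = 1%N.
Proof.
move=> injc ex uni x y.
pose z : {ffun D k m -> F} := [ffun d => match d with
   | inl i' => match [pick i | c i == i'] with Some i => x i | None => 0 end
   | inr j => y (cast_ord (esym e) j) end].
have zc : forall i, z (inl (c i)) = x i.
  move=> i; rewrite ffunE /=; case: pickP => [i0 /eqP /injc -> // | h].
  by have := h i; rewrite eqxx.
have [w [Ww Hw]] := ex z.
set P := [pred p : {ffun 'I_k -> F} * {ffun 'I_m' -> F} | W (vec e p)].
have Rp0 : [forall i, (unvec e w).1 (c i) == x i] && (b ==> ((unvec e w).2 == y)).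
  apply/andP; split.
    by apply/forallP=> i; rewrite ffunE Hw /= ?codom_f // zc.
  apply/implyP=> bb; apply/eqP/ffunP=> j; rewrite !ffunE Hw //= ffunE /=.
  by rewrite cast_ordK.
rewrite (@eq_in_count _ _ (pred1 (unvec e w))).
  rewrite count_uniq_mem ?enum_uniq // mem_enum inE unvecK Ww.
  reflexivity.
move=> p; rewrite mem_enum inE => Wp /=.
apply/idP/eqP => [/andP [/forallP h1 h2] | ->] //.
rewrite -(vecK e p); congr unvec; apply: uni => //.
case=> [i' | j]; rewrite ffunE /=.
  case/codomP=> i ->; have /eqP -> := h1 i.
  by rewrite Hw /= ?codom_f // zc.
move=> bb; move: h2; rewrite bb /= => /eqP ->; by rewrite Hw // ffunE.
Qed.
Lemma enum_inj (k : nat) (S : {set 'I_k}) a : #|S| = a ->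
  exists c : 'I_a -> 'I_k, [/\ injective c, forall i, c i \in S &
    forall i', i' \in S -> exists i, c i = i'].
Proof.
move=> h; subst a; exists enum_val; split.
- exact: enum_val_inj.
- exact: enum_valP.
- move=> i' Si'; exists (enum_rank_in Si' i'); exact: enum_rankK_in.
Qed.

Local Close Scope ring_scope.
Theorem theorem3p5 (F : finFieldType) (s t k : nat) :
  (1 <= s)%N -> (s < t)%N -> (t < k)%N ->
  (exists A, @is_linear_AOA F s t k A) ->
  exists B, @is_linear_AOA F (k - t) (k - s) k B.
Proof.
move=> s1 st tk [A [[_ _ [_ _ _ hOA] _ hAOA] h0 hlin]].
have e : ((k - s) - (k - t) = t - s)%N by lia.
pose C := fun v : {ffun D k (t - s) -> F} => unvec (erefl (t - s)) v \in A.
pose W := fun w : {ffun D k (t - s) -> F} =>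
  [forall c0 : {ffun D k (t - s) -> F}, C c0 ==> (\sum_d w d * c0 d == 0)%R].
pose B := enum [pred p : {ffun 'I_k -> F} * {ffun 'I_((k - s) - (k - t)) -> F} |
  W (vec e p)].
have Clin : forall a (u v : {ffun D k (t - s) -> F}), C u -> C v ->
    C [ffun d => (a * u d + v d)%R].
  move=> a u v; rewrite /C => Cu Cv; have := hlin a _ _ Cu Cv.
  congr (_ \in A); congr (_, _); apply/ffunP=> i; rewrite !ffunE //.
have C0 : C [ffun => 0%R].
  rewrite /C; move: h0; congr (_ \in A); congr (_, _); apply/ffunP=> i;
  by rewrite !ffunE.
have key : forall a (c : 'I_a -> 'I_k) (b : bool), injective c ->
    (b = false /\ a = (k - s)%N \/ b = true /\ a = (k - t)%N) ->
    forall x y, count (fun r : {ffun 'I_k -> F} * {ffun 'I_((k - s) - (k - t)) -> F} =>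
      [forall i, r.1 (c i) == x i] && (b ==> (r.2 == y))) B = 1%N.
  move=> a c b injc hab.
  pose S' := [set i | i \notin codom c].
  have cS' : #|S'| = (k - a)%N.
    have := cardC (mem (codom c)); rewrite card_codom // !card_ord => h.
    have -> : #|S'| = #|[predC codom c]|.
      by apply: eq_card => i; rewrite inE.
    by move: h; set q := #|_| => <-; rewrite addKn.
  have [c' [injc' c'S Sc']] := enum_inj cS'.
  have hA := @A_side F k (t - s) A _ c' (~~ b) (fun i => i \in S').
  have [exA uniA] : (forall z : {ffun D k (t - s) -> F}, exists c0, C c0 /\
     forall d, (match d with inl i => i \in S' | inr _ => ~~ b end) -> c0 d = z d) /\
     (forall c1 c2 : {ffun D k (t - s) -> F}, C c1 -> C c2 ->
     (forall d, (match d with inl i => i \in S' | inr _ => ~~ b end) -> c1 d = c2 d) ->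
     c1 = c2).
    apply: hA => //.
    case: hab => [[-> ha] | [-> ha]] /=; move: c' injc' {c'S Sc'} cS'.
      have -> : (k - a = s)%N by lia.
      by move=> cc injcc _ x y; apply: hAOA.
    have -> : (k - a = t)%N by lia.
    move=> c' injc' _ x y; rewrite -(hOA c' injc' x) count_map.
    by apply: eq_count => r /=; rewrite andbT.
  have [exW uniW] := @dual_unique F (D k (t - s)) C
    (fun d => match d with inl i => i \in S' | inr _ => ~~ b end) Clin C0 exA uniA.
  apply: (@B_side F k (t - s) _ e W a c b injc).
    move=> z; have [w [Ww Hw]] := exW z; exists w; split => // d Qd.
    by apply: Hw; case: d Qd => [i|j] /=; rewrite ?inE ?negbK.
  move=> w1 w2 W1 W2 ag; apply: uniW => // d Qd.
  by apply: ag; case: d Qd => [i|j] /=; rewrite ?inE ?negbK.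
exists B; split; [split; [lia | lia | split | | ] | | ].
- lia.
- lia.
- have injw : injective (widen_ord (leq_subr s k)).
    by move=> i j [] /val_inj.
  rewrite size_map (size_count (X := {ffun 'I_(k - s) -> F})
    (P := fun x (r : {ffun 'I_k -> F} * {ffun 'I_((k - s) - (k - t)) -> F}) => [forall i, r.1 (widen_ord (leq_subr s k) i) == x i])).
    rewrite (eq_bigr (fun _ => 1%N)); last first.
      move=> x _; rewrite -(key _ _ false injw (or_introl (conj erefl erefl)) x [ffun => 0%R]).
      by apply: eq_count => r /=; rewrite andbT.
    by rewrite sum1_card card_ffun card_ord.
  move=> r; rewrite (bigD1 [ffun i => r.1 (widen_ord (leq_subr s k) i)]) //=.
  rewrite big1; first by apply/eqP; rewrite addn0 eqb1; apply/forallP=> i; rewrite ffunE.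
  move=> x nx; apply/eqP; rewrite eqb0; apply/negP => /forallP h.
  by move/negP: nx; apply; apply/eqP/ffunP=> i; rewrite ffunE (eqP (h i)).
- move=> c injc x; rewrite count_map.
  rewrite -(key _ c false injc (or_introl (conj erefl erefl)) x [ffun => 0%R]).
  by apply: eq_count => r /=; rewrite andbT.
- by rewrite card_ffun card_ord.
- move=> c injc x y.
  exact: (key _ c true injc (or_intror (conj erefl erefl)) x y).
- rewrite mem_enum inE; apply/forallP=> c0; apply/implyP=> _.
  rewrite big1 // => d _; rewrite ffunE; case: d => [i|j] /=; rewrite ffunE mul0r //.
- move=> a u v; rewrite !mem_enum !inE => Wu Wv.
  apply/forallP=> c0; apply/implyP=> Cc.
  have := forallP Wu c0; have := forallP Wv c0; rewrite Cc /= => /eqP hv /eqP hu.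
  rewrite (eq_bigr (fun d => a * (vec e u d * c0 d) + vec e v d * c0 d)%R); last first.
    move=> d _; rewrite mulrA -mulrDl; congr (_ * _)%R.
    by case: d => [i|j]; rewrite !ffunE /=.
  by rewrite big_split /= -mulr_sumr hu hv mulr0 addr0.
Qed.
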